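(* Let $\mu$ be a nonnegative finite measure on the Borel subsets of $[0,\infty)$, and for $\nu\ge 0$ define $|||\mu|||_\nu\in[0,\infty]$ by $|||\mu|||_\nu^2:=\sup_{t>0}t^{-2\nu}\mu([0,t))$. Let $\nu>0$. Then $$\mu([0,\Lambda))+\Lambda^{2\gamma}\int_{[\Lambda,\infty)}\lambda^{-2\gamma}\,d\mu(\lambda)\le\frac{\gamma}{\gamma-\nu}\Lambda^{2\nu}|||\mu|||_\nu^2\quad\text{for all }\Lambda>0\text{ and all }\gamma>\nu,$$ and $$\int_{[0,\Lambda)}\lambda^{-2r}\,d\mu(\lambda)\le\frac{r+\nu}{\nu}\Lambda^{2\nu}|||\mu|||_{r+\nu}^2\quad\text{for all }\Lambda>0\text{ and all }r\ge 0,$$ whenever the respective right-hand side is finite. *)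

(* Defs.v *)
From HB Require Import structures.
From mathcomp Require Import all_boot all_order all_algebra.
From mathcomp Require Import all_classical all_reals all_analysis.
Set Implicit Arguments. Unset Strict Implicit. Unset Printing Implicit Defensive.
Import Order.TTheory GRing.Theory Num.Theory.
Import numFieldNormedType.Exports.
Local Open Scope classical_set_scope.
Local Open Scope ring_scope.
Local Open Scope ereal_scope.

Definition tnorm2 {R : realType} (mu : set R -> \bar R) (nu : R) : \bar R :=
  ereal_sup [set ((t `^ (- (2 * nu)))%:E * mu [set` `[0%R, t[]) | t in [set` `]0%R, +oo[] ].

Definition lam_negpow {R : realType} (s x : R) : \bar R :=
  if x == 0%R then (if s == 0%R then 1 else +oo) else (x `^ (- s))%:E.

(* Main.v *)
Require Import Defs.
From HB Require Import structures.
From mathcomp Require Import all_boot all_order all_algebra.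
From mathcomp Require Import all_classical all_reals all_analysis.
Import Order.TTheory GRing.Theory Num.Theory.
Import numFieldNormedType.Exports.
From mathcomp Require Import measurable_realfun ring lra.
Local Open Scope classical_set_scope.
Local Open Scope ring_scope.
Section S.
Variable R : realType.
Lemma powRN_cvgy (p : R) : 0 < p -> (fun x : R => x `^ (- p)) x @[x --> +oo] --> 0.
Proof.
move=> p0; apply/cvgrPdist_le => e e0.
near=> x.
rewrite sub0r normrN ger0_norm ?powR_ge0//.
have c0 : 0 < (e^-1) `^ p^-1 by rewrite powR_gt0// invr_gt0.
have xc : (e^-1) `^ p^-1 <= x by near: x; exact: nbhs_pinfty_ge.
have x0 : 0 < x by apply: lt_le_trans xc.
rewrite powRN.
have : e^-1 <= x `^ p.
  have := @ge0_ler_powR R p (ltW p0) _ _ _ _ xc.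
  rewrite -powRrM mulVf ?gt_eqF// powRr1; last by rewrite invr_ge0 ltW.
  by apply; rewrite nnegrE ltW.
move=> h; rewrite -(invrK e) lef_pV2// ?posrE ?powR_gt0// invr_gt0.
Unshelve. all: by end_near.
Qed.
Lemma powR_cont (a x : R) : 0 < x -> {for x, continuous (fun y : R => y `^ a)}.
Proof.
move=> x0; apply: differentiable_continuous; apply/derivable1_diffP.
by apply: derivable_powR; rewrite in_itv/= x0.
Qed.

Lemma dF (p x : R) : 0 < x -> is_derive x 1 (fun y : R => - y `^ (-p)) (p * x `^ (-p - 1)).
Proof.
move=> x0; have := is_deriveN (@is_derive1_powR R (-p) x x0).
by rewrite mulNr opprK.
Qed.

Lemma FTCy (c p : R) : 0 < c -> 0 < p ->
  (\int[lebesgue_measure]_(x in `[c, +oo[) (p * x `^ (- p - 1))%:E = (c `^ (- p))%:E)%E.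
Proof.
move=> c0 p0.
rewrite (@ge0_continuous_FTC2y R _ (fun y : R => - y `^ (-p)) c 0).
- by rewrite sub0e EFinN oppeK.
- by move=> x _; rewrite mulr_ge0 ?powR_ge0// ltW.
- apply/continuous_within_itvcyP; split.
    move=> x; rewrite in_itv/= andbT => cx.
    apply: (@continuousM _ _ (cst p) (fun y : R => y `^ (-p-1))); first exact: cst_continuous.
    by apply: powR_cont; apply: lt_trans cx.
  apply: cvg_at_right_filter.
  apply: (@continuousM _ _ (cst p) (fun y : R => y `^ (-p-1))); first exact: cst_continuous.
  exact: powR_cont.
- rewrite -oppr0; apply: cvgN; exact: powRN_cvgy.
- move=> x cx; have := dF p x (lt_trans c0 cx); by case.
- apply: cvg_at_right_filter; apply: cvgN; exact: powR_cont.
- move=> x; rewrite in_itv/= andbT => cx.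
  by rewrite derive1E; have [_ ->] := dF p x (lt_trans c0 cx).
Qed.
End S.
Section S.
Variable R : realType.
Local Open Scope ereal_scope.
Notation LR := (measurableTypeR R).

Lemma mid : measurable_fun setT (fun x : LR => x : R).
Proof. by move=> _ B mB; rewrite setTI. Qed.

Lemma msnd : measurable_fun setT (fun z : R * LR => (z.2 : R)).
Proof. exact: measurableT_comp mid measurable_snd. Qed.

Lemma tonelli_ind (mu : {finite_measure set R -> \bar R}) (P : R -> R -> bool) (k : R -> R) :
  measurable_fun setT (fun z : R * LR => P z.1 z.2) -> measurable_fun setT k ->
  (forall u, (0 <= k u)%R) ->
  \int[mu]_x \int[lebesgue_measure]_u (if P x u then (k u)%:E else 0) =
  \int[lebesgue_measure]_u \int[mu]_x (if P x u then (k u)%:E else 0).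
Proof.
move=> mP mk k0.
rewrite (@fubini_tonelli _ _ R LR R mu lebesgue_measure
   (fun z => if P z.1 z.2 then (k z.2)%:E else 0))//.
  apply: measurable_fun_ifT => //.
  apply/measurable_EFinP; exact: measurableT_comp mk msnd.
by move=> z; case: ifP; rewrite // lee_fin.
Qed.
End S.
Section S2.
Variable R : realType.
Local Open Scope ereal_scope.
Notation LR := (measurableTypeR R).
Lemma mfz (P : R -> R -> bool) (k : R -> R) :
  measurable_fun setT (fun z : R * LR => P z.1 z.2) -> measurable_fun setT k ->
  measurable_fun setT (fun z : R * LR => if P z.1 z.2 then (k z.2)%:E else 0).
Proof.
move=> mP mk; apply: measurable_fun_ifT => //.
apply/measurable_EFinP; exact: measurableT_comp mk (@msnd R).
Qed.

Lemma mG (mu : {finite_measure set R -> \bar R}) (P : R -> R -> bool) (k : R -> R) :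
  measurable_fun setT (fun z : R * LR => P z.1 z.2) -> measurable_fun setT k ->
  (forall u, (0 <= k u)%R) ->
  measurable_fun setT (fun s : LR => \int[mu]_x (if P x s then (k s)%:E else 0)).
Proof.
move=> mP mk k0.
have f0 : forall z : R * LR, 0 <= (if P z.1 z.2 then (k z.2)%:E else 0).
  by move=> z; case: ifP; rewrite // lee_fin.
have := (@measurable_fun_fubini_tonelli_G _ _ R LR R mu _ (@mfz P k mP mk) f0).
by [].
Qed.
End S2.
Section S3.
Variable R : realType.
Local Open Scope ereal_scope.
Notation LR := (measurableTypeR R).
Lemma mLR (f : R -> R) : measurable_fun setT f -> measurable_fun setT (fun x : LR => f x).
Proof. by move=> mf; exact: measurableT_comp mf (@mid R). Qed.

Lemma mif_LR (L : R) (f : R -> R) : measurable_fun setT f ->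
  measurable_fun setT (fun x : LR => if (L <= x)%R then (f x)%:E else 0).
Proof.
move=> mf; apply: measurable_fun_ifT => //.
  exact: (@measurable_fun_ler _ _ R setT (cst L) (fun z : LR => z : R) (measurable_cst _) (@mid R)).
by apply/measurable_EFinP; exact: mLR.
Qed.
End S3.
Local Open Scope ereal_scope.
Section T.
Variable R : realType.
Variable mu : {finite_measure set R -> \bar R}.

Lemma powRNK (t a : R) : (0 < t)%R -> (t `^ a * t `^ (- a) = 1)%R.
Proof. by move=> t0; rewrite powRN mulfV// gt_eqF// powR_gt0. Qed.

Lemma tn_ub (nu t : R) : (0 < t)%R ->
  (t `^ (- (2 * nu)))%:E * mu [set` `[0%R, t[] <= tnorm2 mu nu.
Proof.
move=> t0; apply: ereal_sup_ubound; exists t => //=.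
by rewrite in_itv/= t0.
Qed.

Lemma tn_bound (nu t : R) : (0 < t)%R ->
  mu [set` `[0%R, t[] <= (t `^ (2 * nu))%:E * tnorm2 mu nu.
Proof.
move=> t0.
have -> : mu [set` `[0%R, t[] =
  (t `^ (2 * nu))%:E * ((t `^ (- (2 * nu)))%:E * mu [set` `[0%R, t[]).
  by rewrite muleA -EFinM powRNK// mul1e.
by apply: lee_wpmul2l; [rewrite lee_fin powR_ge0 | exact: tn_ub].
Qed.

Lemma tn_ge0 (nu : R) : 0 <= tnorm2 mu nu.
Proof.
apply: le_trans _ (tn_ub nu 1 ltr01).
by rewrite mule_ge0// lee_fin powR_ge0.
Qed.
End T.
Local Open Scope ereal_scope.
Section U.
Variable R : realType.
Notation LR := (measurableTypeR R).

Lemma int_if (D : set R) (f : R -> \bar R) (b : R -> bool) :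
  (forall s, b s = (s \in D)) ->
  \int[@lebesgue_measure R]_s (if b s then f s else 0) = \int[@lebesgue_measure R]_(s in D) f s.
Proof.
move=> bE; rewrite [RHS]integral_mkcond; apply: eq_integral => s _.
by rewrite patchE bE.
Qed.

Lemma inner1 (L g x : R) : (0 < L)%R -> (0 < g)%R ->
  \int[@lebesgue_measure R]_s (if (0 <= x)%R && (L <= s)%R && (x < s)%R
     then ((2 * g) * s `^ (- (2 * g) - 1))%:E else 0)
  = if (0 <= x)%R then (if (x < L)%R then (L `^ (- (2 * g)))%:E else (x `^ (- (2 * g)))%:E) else 0.
Proof.
move=> L0 g0; have g20 : (0 < 2 * g)%R by rewrite mulr_gt0.
have [x0|x0] := leP 0%R x; last first.
  by rewrite integral0_eq// => s _; rewrite andFb.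
have [xL|xL] := ltP x L.
  rewrite (@int_if `[L, +oo[%classic); first exact: FTCy.
  move=> s; rewrite mem_setE in_itv/= andbT.
  by rewrite /=; apply/idP/idP => [/andP[]//|sL]; rewrite sL (lt_le_trans xL sL).
rewrite (@int_if `]x, +oo[%classic).
  rewrite integral_itv_obnd_cbnd; first exact: FTCy (lt_le_trans L0 xL) g20.
  apply/measurable_EFinP; apply: measurable_funM => //.
  exact: measurable_funTS (measurable_powR _).
move=> s; rewrite mem_setE in_itv/= andbT.
by apply/idP/idP => [/andP[]//|xs]; rewrite xs andbT (le_trans xL) ?ltW.
Qed.
End U.
Section V.
Variable R : realType.
Notation LR := (measurableTypeR R).
Local Open Scope ereal_scope.

Lemma int_cst_if (mu : {measure set R -> \bar R}) (A : set R) (c : R) (b : R -> bool) :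
  measurable A -> (0 <= c)%R -> (forall x, b x = (x \in A)) ->
  \int[mu]_x (if b x then c%:E else 0) = c%:E * mu A.
Proof.
move=> mA c0 bE.
transitivity (\int[mu]_x (c%:E * (\1_A x)%:E)).
  apply: eq_integral => x _; rewrite bE indicE.
  by case: (x \in A); rewrite ?mule1 ?mule0.
rewrite ge0_integralZl_EFin//; last first.
  by apply/measurable_EFinP; exact: measurable_indic.
by rewrite integral_indic// setIT.
Qed.

Lemma mP1 (L : R) : measurable_fun setT
  (fun z : R * LR => (0 <= z.1)%R && (L <= z.2)%R && (z.1 < z.2)%R).
Proof.
apply: measurable_and; first apply: measurable_and.
- exact: (@measurable_fun_ler _ _ R setT (cst 0%R) (fun z : R * LR => z.1) (measurable_cst _) measurable_fst).
- exact: (@measurable_fun_ler _ _ R setT (cst L) (fun z : R * LR => z.2 : R) (measurable_cst _) (@msnd R)).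
- exact: (@measurable_fun_ltr _ _ R setT (fun z : R * LR => z.1) (fun z : R * LR => z.2 : R) measurable_fst (@msnd R)).
Qed.
End V.
Section W.
Variable R : realType.
Notation LR := (measurableTypeR R).
Local Open Scope ereal_scope.

Lemma part1 (mu : {finite_measure set R -> \bar R}) (nu L g : R) :
  (0 < nu)%R -> (0 < L)%R -> (nu < g)%R -> tnorm2 mu nu < +oo ->
  mu [set` `[0%R, L[] + (L `^ (2 * g))%:E *
        \int[mu]_(x in `[L, +oo[) (x `^ (- (2 * g)))%:E
     <= (g / (g - nu))%:E * (L `^ (2 * nu))%:E * tnorm2 mu nu.
Proof.
move=> nu0 L0 nug Mfin.
have g0 : (0 < g)%R by apply: lt_trans nug.
have g20 : (0 < 2 * g)%R by rewrite mulr_gt0.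
have q0 : (0 < 2 * g - 2 * nu)%R by rewrite subr_gt0 ltr_pM2l.
set M := tnorm2 mu nu.
have M0 : 0 <= M := tn_ge0 _ mu nu.
have Mr : M = (fine M)%:E by rewrite fineK// ge0_fin_numE.
set m := fine M.
have m0 : (0 <= m)%R by rewrite -lee_fin -Mr.
pose k := fun s : R => (2 * g * s `^ (- (2 * g) - 1))%R.
pose P := fun x s : R => (0 <= x)%R && (L <= s)%R && (x < s)%R.
have k0 : forall s, (0 <= k s)%R by move=> s; rewrite mulr_ge0 ?powR_ge0// ltW.
have mk : measurable_fun setT k.
  by apply: measurable_funM => //; exact: measurable_powR.
have TT := tonelli_ind _ mu P k (mP1 _ L) mk k0.
set I := \int[mu]_(x in `[L, +oo[) (x `^ (- (2 * g)))%:E.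
have I0 : 0 <= I by apply: integral_ge0 => x _; rewrite lee_fin powR_ge0.
set F := mu [set` `[0%R, L[].
have F0 : 0 <= F by exact: measure_ge0.
have Ffin : F \is a fin_num by exact: fin_num_measure.
have LHS : \int[mu]_x \int[lebesgue_measure]_s (if P x s then (k s)%:E else 0) =
    (L `^ (- (2 * g)))%:E * F + I.
  transitivity (\int[mu]_x ((L `^ (- (2 * g)))%:E * (\1_(`[0%R, L[%classic) x)%:E +
      ((fun x => (x `^ (- (2 * g)))%:E) \_ `[L, +oo[%classic) x)).
    apply: eq_integral => x _; rewrite /P inner1// indicE patchE !mem_setE !in_itv/= andbT.
    case: (leP 0%R x) => x0 /=; case: (ltP x L) => xL /=.
    - by rewrite mule1 adde0.
    - by rewrite mule0 add0e.
    - by rewrite mule0 adde0.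
    - by exfalso; lra.
  rewrite ge0_integralD//; last 4 first.
  - by move=> x _; rewrite mule_ge0// lee_fin powR_ge0.
  - apply: emeasurable_funM => //.
    by apply/measurable_EFinP; exact: measurable_indic.
  - by move=> x _; rewrite patchE; case: ifP => // _; rewrite lee_fin powR_ge0.
  - apply/(measurable_restrictT _ _).1 => //.
    apply/measurable_EFinP; exact: measurable_funTS (measurable_powR _).
  rewrite ge0_integralZl_EFin ?powR_ge0//; last first.
    by apply/measurable_EFinP; exact: measurable_indic.
  by rewrite integral_indic// setIT /I [in RHS]integral_mkcond.
pose q := (2 * g - 2 * nu)%R.
pose C := (m * (2 * g) / q)%R.
have RHS : \int[lebesgue_measure]_s \int[mu]_x (if P x s then (k s)%:E else 0)
    <= (C * L `^ (- q))%:E.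
  have q0' : (0 < q)%R by [].
  apply: (@le_trans _ _ (\int[lebesgue_measure]_s
     (if (L <= s)%R then (C * (q * s `^ (- q - 1)))%:E else 0))).
    apply: ge0_le_integral => //.
    - by move=> s _; apply: integral_ge0 => x _; case: ifP; rewrite // lee_fin.
    - exact: (@mG R mu P k (mP1 _ L) mk k0).
    - apply: (@mif_LR R L (fun x => C * (q * x `^ (- q - 1)))%R).
      by apply: measurable_funM => //; apply: measurable_funM => //; exact: measurable_powR.
    - move=> s _; rewrite /P; case: (leP L s) => Ls; last first.
        by rewrite integral0_eq// => x _; rewrite andbF andFb.
      have s0 : (0 < s)%R by apply: lt_le_trans Ls.
      rewrite (@int_cst_if _ mu `[0%R, s[%classic (k s) (fun x => (0 <= x)%R && true && (x < s)%R)) //; last first.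
        by move=> x; rewrite andbT mem_setE in_itv.
      have ks0 : 0 <= (k s)%:E by rewrite lee_fin.
      apply: le_trans (lee_wpmul2l ks0 (tn_bound _ mu nu s s0)) _.
      change (tnorm2 mu nu) with M; rewrite Mr -!EFinM lee_fin le_eqVlt; apply/orP; left; apply/eqP.
      have E : (- q - 1 = (- (2 * g) - 1) + 2 * nu)%R by rewrite /q; ring.
      rewrite E powRD ?(gt_eqF s0) ?implybT// /k /C.
      rewrite /m /q; field; exact: lt0r_neq0.
  rewrite (@int_if _ `[L, +oo[%classic); last by move=> s; rewrite mem_setE in_itv/= andbT.
  under eq_integral do rewrite EFinM.
  rewrite ge0_integralZl_EFin//.
  - by rewrite (FTCy _ L q L0 q0') -EFinM.
  - by move=> x _; rewrite lee_fin mulr_ge0 ?powR_ge0// ltW.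
  - apply/measurable_EFinP; apply: measurable_funTS.
    apply: (@mLR R (fun x => q * x `^ (- q - 1))%R).
    by apply: measurable_funM => //; exact: measurable_powR.
  - by rewrite /C mulr_ge0 ?invr_ge0 ?mulr_ge0// ltW.
rewrite -TT LHS in RHS.
have Ifin : I \is a fin_num.
  have HF : 0 <= (L `^ (- (2 * g)))%:E * F by rewrite mule_ge0// lee_fin powR_ge0.
  by rewrite ge0_fin_numE//; apply: le_lt_trans (leeDr I HF) (le_lt_trans RHS (ltey _)).
rewrite -(fineK Ifin) -(fineK Ffin) Mr in RHS *.
move: RHS; rewrite -!EFinM -EFinD !lee_fin.
have i0 : (0 <= fine I)%R by rewrite fine_ge0.
have f0 : (0 <= fine F)%R by rewrite fine_ge0.
move: (fine I) (fine F) i0 f0 => i f i0 f0.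
have A0 : (0 < L `^ (2 * g))%R by rewrite powR_gt0.
rewrite powRN.
have -> : (L `^ (- q) = L `^ (2 * nu) / L `^ (2 * g))%R.
  by rewrite /q opprB powRB// (gt_eqF L0) implybT.
move: (L `^ (2 * g))%R (L `^ (2 * nu))%R A0 => A B A0 H.
rewrite -(ler_pM2l A0) in H.
have E1 : (A * (A^-1 * f + i) = f + A * i)%R by field; rewrite gt_eqF.
have E2 : (A * (C * (B / A)) = g / (g - nu) * B * m)%R.
  rewrite /C /q; field.
  by apply/and3P; split; apply: lt0r_neq0; rewrite // subr_gt0.
by move: H; rewrite E1 E2.
Qed.
End W.
Section X.
Variable R : realType.
Local Open Scope ereal_scope.

Lemma powRV (x p : R) : (0 < x)%R -> (x^-1 `^ p = x `^ (- p))%R.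
Proof.
move=> x0; by rewrite -powR_inv1 ?ltW// -powRrM mulN1r.
Qed.

Lemma FTCab (a b q : R) : (0 < a)%R -> (a < b)%R -> (0 < q)%R ->
  \int[@lebesgue_measure R]_(u in `[a, b[) (q * u `^ (q - 1))%:E = (b `^ q - a `^ q)%:E.
Proof.
move=> a0 ab q0.
rewrite integral_itv_bndo_bndc; last first.
  apply/measurable_EFinP; apply: measurable_funTS.
  by apply: measurable_funM => //; exact: measurable_powR.
rewrite (@continuous_FTC2 _ _ (fun y : R => (y `^ q)%R)) ?EFinB//.
- apply: continuous_in_subspaceT => x; rewrite inE/= in_itv/= => /andP[ax _].
  apply: (@continuousM _ _ (cst q) (fun y : R => (y `^ (q-1))%R)); first exact: cst_continuous.
  exact: powR_cont (lt_le_trans a0 ax).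
- split.
  + move=> x; rewrite in_itv/= => /andP[ax _].
    by apply: derivable_powR; rewrite in_itv/= andbT (lt_trans a0 ax).
  + by apply: cvg_at_right_filter; exact: powR_cont.
  + by apply: cvg_at_left_filter; exact: powR_cont (lt_trans a0 ab).
- move=> x; rewrite in_itv/= => /andP[ax _].
  by rewrite powR_derive1// in_itv/= andbT (lt_trans a0 ax).
Qed.
End X.
Section Y.
Variable R : realType.
Local Open Scope ereal_scope.

Lemma inner2 (L r x : R) : (0 < L)%R -> (0 < r)%R ->
  \int[@lebesgue_measure R]_u (if (0 < x)%R && (x < L)%R && (L^-1 <= u)%R && (u * x < 1)%R
     then (2 * r * u `^ (2 * r - 1))%:E else 0)
  = if (0 < x)%R && (x < L)%R then (x `^ (- (2 * r)) - L `^ (- (2 * r)))%:E else 0.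
Proof.
move=> L0 r0.
case: ifP => [/andP[x0 xL]|xF]; last first.
  by rewrite integral0_eq// => u _; rewrite xF.
rewrite (@int_if _ [set` (`[L^-1, x^-1[)%R]); last first.
  move=> u; rewrite mem_setE in_itv/=.
  by rewrite -[(x^-1)%R]div1r ltr_pdivlMr.
rewrite FTCab ?invr_gt0 ?mulr_gt0//; last by rewrite ltf_pV2.
by rewrite !powRV.
Qed.
End Y.
Section Z.
Variable R : realType.
Local Open Scope ereal_scope.
Notation LR := (measurableTypeR R).

Lemma mu0 (mu : {finite_measure set R -> \bar R}) (a : R) : (0 < a)%R ->
  tnorm2 mu a < +oo -> mu [set 0%R] = 0.
Proof.
move=> a0 Mfin.
set M := tnorm2 mu a.
have M0 : 0 <= M := tn_ge0 _ mu a.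
have Mr : M = (fine M)%:E by rewrite fineK// ge0_fin_numE.
have m0 : (0 <= fine M)%R by rewrite -lee_fin -Mr.
move: (fine M) m0 Mr => m m0 Mr.
have H : forall t, (0 < t)%R -> mu [set 0%R] <= (t `^ (2 * a) * m)%:E.
  move=> t t0; rewrite EFinM -Mr.
  apply: le_trans (tn_bound _ mu a t t0).
  apply: le_measure; rewrite ?inE//.
  by move=> x ->; rewrite /= in_itv/= lexx t0.
have fz : mu [set 0%R] \is a fin_num by exact: fin_num_measure.
have z0 : 0 <= mu [set 0%R] by exact: measure_ge0.
rewrite -(fineK fz) in H z0 *.
move: (fine (mu [set 0%R])) H z0 => z H z0.
rewrite lee_fin in z0.
have [zp|zn] := ltP 0%R z; last by congr EFin; apply/eqP; rewrite eq_le zn.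
exfalso.
have m1 : (0 < 2 * (m + 1))%R by rewrite mulr_gt0 // ltr_wpDl.
set w := (z / (2 * (m + 1)))%R.
have w0 : (0 < w)%R by rewrite divr_gt0.
have := H (w `^ (2 * a)^-1)%R (powR_gt0 _ w0).
rewrite -powRrM mulVf ?gt_eqF ?mulr_gt0// powRr1; last exact: ltW w0.
rewrite lee_fin.
have wE : (w * (2 * (m + 1)) = z)%R by rewrite /w divfK ?gt_eqF.
move: w w0 wE => w w0 wE zw.
nra.
Qed.
End Z.
Section Q.
Variable R : realType.
Local Open Scope ereal_scope.
Notation LR := (measurableTypeR R).

Lemma mP2 (L : R) : measurable_fun setT
  (fun z : R * LR => (0 < z.1)%R && (z.1 < L)%R && (L^-1 <= z.2)%R && (z.2 * z.1 < 1)%R).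
Proof.
apply: measurable_and; first apply: measurable_and; first apply: measurable_and.
- exact: (@measurable_fun_ltr _ _ R setT (cst 0%R) (fun z : R * LR => z.1) (measurable_cst _) measurable_fst).
- exact: (@measurable_fun_ltr _ _ R setT (fun z : R * LR => z.1) (cst L) measurable_fst (measurable_cst _)).
- exact: (@measurable_fun_ler _ _ R setT (cst L^-1%R) (fun z : R * LR => z.2 : R) (measurable_cst _) (@msnd R)).
- apply: (@measurable_fun_ltr _ _ R setT (fun z : R * LR => (z.2 : R) * z.1)%R (cst 1%R) _ (measurable_cst _)).
  exact: measurable_funM (@msnd R) measurable_fst.
Qed.

Lemma powRN_le (x y p : R) : (0 < x)%R -> (x <= y)%R -> (0 <= p)%R -> (y `^ (- p) <= x `^ (- p))%R.
Proof.
move=> x0 xy p0; rewrite !powRN lef_pV2 ?posrE ?powR_gt0//; last exact: lt_le_trans xy.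
by apply: ge0_ler_powR; rewrite // nnegrE ltW// (lt_le_trans x0).
Qed.
End Q.
Section Q2.
Variable R : realType.
Local Open Scope ereal_scope.
Notation LR := (measurableTypeR R).

Lemma part2pos (mu : {finite_measure set R -> \bar R}) (nu L r : R) :
  (0 < nu)%R -> (0 < L)%R -> (0 < r)%R -> tnorm2 mu (r + nu) < +oo ->
  \int[mu]_(x in `[0%R, L[) lam_negpow (2 * r) x
     <= ((r + nu) / nu)%:E * (L `^ (2 * nu))%:E * tnorm2 mu (r + nu).
Proof.
move=> nu0 L0 r0 Mfin.
have a0 : (0 < r + nu)%R by rewrite addr_gt0.
have mu00 := mu0 _ mu (r + nu) a0 Mfin.
set M := tnorm2 mu (r + nu).
have M0 : 0 <= M := tn_ge0 _ mu (r + nu).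
have Mr : M = (fine M)%:E by rewrite fineK// ge0_fin_numE.
set m := fine M.
have m0 : (0 <= m)%R by rewrite -lee_fin -Mr.
have r20 : (0 < 2 * r)%R by rewrite mulr_gt0.
have E1 : \int[mu]_(x in `[0%R, L[) lam_negpow (2 * r) x =
    \int[mu]_(x in `]0%R, L[) (x `^ (- (2 * r)))%:E.
  have -> : [set` `[0%R, L[] = [set 0%R] `|` [set` `]0%R, L[].
    apply/seteqP; split => x /=; rewrite !in_itv/=.
      by move=> /andP[]; rewrite le_eqVlt => /orP[/eqP <-|->]; [left|right].
    by case=> [->|/andP[/ltW -> ->]]; rewrite ?lexx.
  rewrite ge0_integral_setU//.
  - rewrite null_set_integral// ?add0e; last exact: measurable_fun_set1.
    apply: eq_integral => x; rewrite inE/= in_itv/= => /andP[x0 _].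
    by rewrite /lam_negpow gt_eqF.
  - apply/measurable_funU => //; split; first exact: measurable_fun_set1.
    apply: (eq_measurable_fun (fun x : R => (x `^ (- (2 * r)))%:E)).
      by move=> x; rewrite inE/= in_itv/= => /andP[x0 _]; rewrite /lam_negpow gt_eqF.
    apply/measurable_EFinP; exact: measurable_funTS (measurable_powR _).
  - move=> x _; rewrite /lam_negpow; case: ifP => _; last by rewrite lee_fin powR_ge0.
    by case: ifP.
  - apply/disj_set2P; apply/seteqP; split => // x /= [->]; by rewrite in_itv/= ltxx.
rewrite E1.
pose k2 := fun u : R => (2 * r * u `^ (2 * r - 1))%R.
pose P2 := fun x u : R => (0 < x)%R && (x < L)%R && (L^-1 <= u)%R && (u * x < 1)%R.
have k0 : forall u, (0 <= k2 u)%R by move=> u; rewrite mulr_ge0 ?powR_ge0// ltW.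
have mk : measurable_fun setT k2.
  by apply: measurable_funM => //; exact: measurable_powR.
have TT := tonelli_ind _ mu P2 k2 (mP2 _ L) mk k0.
have S2 : \int[mu]_(x in `]0%R, L[) (x `^ (- (2 * r)))%:E =
    (L `^ (- (2 * r)))%:E * mu [set` `]0%R, L[] +
    \int[mu]_x \int[lebesgue_measure]_u (if P2 x u then (k2 u)%:E else 0).
  rewrite integral_mkcond.
  transitivity (\int[mu]_x ((L `^ (- (2 * r)))%:E * (\1_(`]0%R, L[%classic) x)%:E +
     (if (0 < x)%R && (x < L)%R then (x `^ (- (2 * r)) - L `^ (- (2 * r)))%:E else 0))).
    apply: eq_integral => x _; rewrite patchE indicE mem_setE in_itv/=.
    case: ifP => _; last by rewrite mule0 adde0.
    by rewrite mule1 -EFinD; congr EFin; ring.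
  rewrite ge0_integralD//; last 4 first.
  - by move=> x _; rewrite mule_ge0// lee_fin powR_ge0.
  - apply: emeasurable_funM => //.
    by apply/measurable_EFinP; exact: measurable_indic.
  - move=> x _; case: ifP => // /andP[x0 xL].
    by rewrite lee_fin subr_ge0 powRN_le// ltW.
  - apply: measurable_fun_ifT => //.
      apply: measurable_and.
        by apply: measurable_fun_ltr.
      by apply: measurable_fun_ltr.
    apply/measurable_EFinP; apply: measurable_funB => //; exact: measurable_powR.
  congr (_ + _).
    rewrite ge0_integralZl_EFin ?powR_ge0//; last first.
      by apply/measurable_EFinP; exact: measurable_indic.
    by rewrite integral_indic// setIT.
  by apply: eq_integral => x _; rewrite inner2.
rewrite S2 TT.
pose p := (2 * nu)%R.
have p0 : (0 < p)%R by rewrite mulr_gt0.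
pose C := (m * (2 * r) / p)%R.
have RHS : \int[lebesgue_measure]_u \int[mu]_x (if P2 x u then (k2 u)%:E else 0)
    <= (C * L `^ p)%:E.
  have Li0 : (0 < L^-1)%R by rewrite invr_gt0.
  apply: (@le_trans _ _ (\int[lebesgue_measure]_u
     (if (L^-1 <= u)%R then (C * (p * u `^ (- p - 1)))%:E else 0))).
    apply: ge0_le_integral => //.
    - by move=> u _; apply: integral_ge0 => x _; case: ifP; rewrite // lee_fin.
    - exact: (@mG R mu P2 k2 (mP2 _ L) mk k0).
    - apply: (@mif_LR R (L^-1)%R (fun x => C * (p * x `^ (- p - 1)))%R).
      by apply: measurable_funM => //; apply: measurable_funM => //; exact: measurable_powR.
    - move=> u _; rewrite /P2; case: (leP (L^-1)%R u) => Lu; last first.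
        by rewrite integral0_eq// => x _; rewrite andbF andFb.
      have u0 : (0 < u)%R by apply: lt_le_trans Lu.
      have uL : (u^-1 <= L)%R by rewrite -(invrK L) lef_pV2 ?posrE// invr_gt0.
      have ui0 : (0 < u^-1)%R by rewrite invr_gt0.
      rewrite (@int_cst_if _ mu [set` (`]0, u^-1[)%R] (k2 u)
        (fun x : R => (0 < x)%R && (x < L)%R && true && (u * x < 1)%R)) //; last first.
        move=> x; rewrite andbT mem_setE in_itv/=.
        apply/idP/idP => [/andP[/andP[x0 xL] ux]|/andP[x0 xu]].
          by rewrite x0 /= -[(u^-1)%R]mulr1 ltr_pdivlMl.
        rewrite x0 (lt_le_trans xu uL)/=.
        by move: xu; rewrite -[(u^-1)%R]mulr1 ltr_pdivlMl.
      have ks0 : 0 <= (k2 u)%:E by rewrite lee_fin.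
      have Hm : mu [set` (`]0, u^-1[)%R] <= mu [set` (`[0, u^-1[)%R].
        apply: le_measure; rewrite ?inE//.
        by move=> x /=; rewrite !in_itv/= => /andP[/ltW -> ->].
      apply: le_trans (lee_wpmul2l ks0 Hm) _.
      apply: le_trans (lee_wpmul2l ks0 (tn_bound _ mu (r + nu) _ ui0)) _.
      change (tnorm2 mu (r + nu)) with M; rewrite Mr -!EFinM lee_fin le_eqVlt; apply/orP; left; apply/eqP.
      rewrite powRV// /k2.
      have E : (- p - 1 = (2 * r - 1) + - (2 * (r + nu)))%R by rewrite /p; ring.
      rewrite E [in RHS]powRD; last by rewrite (gt_eqF u0) implybT.
      rewrite /C /m /p; field; exact: lt0r_neq0.
  rewrite (@int_if _ [set` (`[L^-1, +oo[)%R]); last by move=> s; rewrite mem_setE in_itv/= andbT.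
  under eq_integral do rewrite EFinM.
  rewrite ge0_integralZl_EFin//.
  - by rewrite (FTCy _ (L^-1)%R p Li0 p0) -EFinM powRV// opprK.
  - by move=> x _; rewrite lee_fin mulr_ge0 ?powR_ge0// ltW.
  - apply/measurable_EFinP; apply: measurable_funTS.
    apply: (@mLR R (fun x => p * x `^ (- p - 1))%R).
    by apply: measurable_funM => //; exact: measurable_powR.
  - by rewrite /C mulr_ge0 ?invr_ge0 ?mulr_ge0// ltW.
have L2 : mu [set` `]0%R, L[] <= (L `^ (2 * (r + nu)))%:E * M.
  apply: le_trans (tn_bound _ mu (r + nu) L L0).
  apply: le_measure; rewrite ?inE//.
  by move=> x /=; rewrite !in_itv/= => /andP[/ltW -> ->].
have A0 : 0 <= (L `^ (- (2 * r)))%:E by rewrite lee_fin powR_ge0.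
apply: le_trans (leeD (lee_wpmul2l A0 L2) RHS) _.
rewrite Mr -!EFinM -EFinD lee_fin le_eqVlt; apply/orP; left; apply/eqP.
rewrite mulrA -powRD; last by rewrite (gt_eqF L0) implybT.
have -> : (- (2 * r) + 2 * (r + nu) = p)%R by rewrite /p; ring.
rewrite /C /p /m; field; exact: lt0r_neq0.
Qed.
End Q2.
Section Fin.
Variable R : realType.
Local Open Scope ereal_scope.

Lemma part2zero (mu : {finite_measure set R -> \bar R}) (nu L : R) :
  (0 < nu)%R -> (0 < L)%R ->
  \int[mu]_(x in `[0%R, L[) lam_negpow (2 * 0) x
     <= ((0 + nu) / nu)%:E * (L `^ (2 * nu))%:E * tnorm2 mu (0 + nu).
Proof.
move=> nu0 L0.
have -> : \int[mu]_(x in `[0%R, L[) lam_negpow (2 * 0) x = mu [set` `[0%R, L[].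
  transitivity (\int[mu]_(x in `[0%R, L[) (cst 1 x)).
    apply: eq_integral => x _; rewrite /lam_negpow mulr0 eqxx.
    by case: ifP => //; rewrite oppr0 powRr0.
  by rewrite integral_cst// mul1e.
rewrite add0r divff ?gt_eqF// mul1e.
exact: tn_bound.
Qed.
End Fin.
Local Open Scope ereal_scope.

Theorem lemma1 (R : realType) (mu : {finite_measure set R -> \bar R})
  (mu_supp : mu [set` `]-oo, 0%R[] = 0) (nu : R) (nu_gt0 : (0 < nu)%R) :
  (forall (Lam gam : R), (0 < Lam)%R -> (nu < gam)%R ->
     tnorm2 mu nu < +oo ->
     mu [set` `[0%R, Lam[] + (Lam `^ (2 * gam))%:E *
        \int[mu]_(x in `[Lam, +oo[) (x `^ (- (2 * gam)))%:E
     <= (gam / (gam - nu))%:E * (Lam `^ (2 * nu))%:E * tnorm2 mu nu)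
  /\
  (forall (Lam r : R), (0 < Lam)%R -> (0 <= r)%R ->
     tnorm2 mu (r + nu) < +oo ->
     \int[mu]_(x in `[0%R, Lam[) lam_negpow (2 * r) x
     <= ((r + nu) / nu)%:E * (Lam `^ (2 * nu))%:E * tnorm2 mu (r + nu)).
Proof.
split.
  by move=> Lam gam L0 ng Mf; exact: part1.
move=> Lam r L0 r0 Mf.
have [rp|rn] := ltP 0%R r; first exact: part2pos.
have -> : r = 0%R by apply/eqP; rewrite eq_le rn r0.
exact: part2zero.
Qed.
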